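(* Let $(\Lambda,d)$ be a finitely aligned $k$-graph and let $(\overline{\Lambda},\overline d)$ be its extension as described in the context. Suppose $v\in\Lambda^0$ and $E\subseteq v\Lambda$ is a finite exhaustive subset of $\Lambda$. Then $E$ is also a finite exhaustive subset of $\overline{\Lambda}$, i.e. for every $\mu\in v\overline{\Lambda}$ there is $\lambda\in E$ with $\overline{\Lambda}^{\min}(\lambda,\mu)\neq\emptyset$.
   Context: A $k$-graph $(\Lambda,d)$ is a countable category with a degree functor $d:\Lambda\to\mathbb{N}^k$ satisfying unique factorization; $\Lambda^0$ vertices, $r,s$ range/source, $v\Gamma=\{\lambda\in\Gamma:r(\lambda)=v\}$, $v\Lambda^n=\{\lambda:r(\lambda)=v,d(\lambda)=n\}$; $e_i$ standard basis, $\le$ coordinatewise, $\vee,\wedge$ coordinatewise max/min. For a $k$-graph $\Gamma$, $\Gamma^{\min}(\lambda,\mu)=\{(\alpha,\beta):\lambda\alpha=\mu\beta,\ d(\lambda\alpha)=d(\lambda)\vee d(\mu)\}$; $\Gamma$ is finitely aligned if these are finite; $E\subseteq v\Gamma$ is exhaustive (in $\Gamma$) if for every $\mu\in v\Gamma$ there is $\lambda\in E$ with $\Gamma^{\min}(\lambda,\mu)\neq\emptyset$. For $m\in(\mathbb{N}\cup\{\infty\})^k$, $\Omega_{k,m}$ has objects $\{p\in\mathbb{N}^k:p\le m\}$, morphisms $(p,q)$, $p\le q\le m$, $r(p,q)=p$, $s(p,q)=q$, $d(p,q)=q-p$. A graph morphism $x:\Omega_{k,m}\to\Lambda$ is a degree-preserving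 functor; $d(x)=m$, $x(a,b)=x((a,b))$, $x(a)=x(a,a)$. It is a boundary path if there is $n_x\in\mathbb{N}^k$, $n_x\le d(x)$, with $x(p)\Lambda^{e_i}=\emptyset$ whenever $p\in\mathbb{N}^k$, $n_x\le p\le d(x)$, $p_i=d(x)_i$; $\Lambda^{\le\infty}$ is the set of boundary paths. $\sigma^px(a,b)=x(a+p,b+p)$; $\lambda x$ is the concatenation of $\lambda$ and $x$. $V_\Lambda=\{(x;m):x\in\Lambda^{\le\infty},m\in\mathbb{N}^k,m\not\le d(x)\}$, $(x;m)\approx(y;p)$ iff $x(m\wedge d(x))=y(p\wedge d(y))$ and $m-m\wedge d(x)=p-p\wedge d(y)$; classes $[x;m]$ form $\widetilde{V_\Lambda}$. $P_\Lambda=\{(x;(m,n)):x\in\Lambda^{\le\infty},m\le n\in\mathbb{N}^k,n\not\le d(x)\}$, $(x;(m,n))\sim(y;(p,q))$ iff $x(m\wedge d(x),n\wedge d(x))=y(p\wedge d(y),q\wedge d(y))$, $m-m\wedge d(x)=p-p\wedge d(y)$, $n-m=q-p$; classes $[x;(m,n)]$ form $\widetilde{P_\Lambda}$. The extension $\overline{\Lambda}$ is the $k$-graph with objects $\Lambda^0\sqcup\widetilde{V_\Lambda}$ and morphisms $\Lambda\sqcup\widetilde{P_\Lambda}$: on $\Lambda$ everything is as in $\Lambda$; $\overline r([x;(m,n)])=x(m)$ if $m\le d(x)$, else $[x;m]$; $\overline s([x;(m,n)])=[x;n]$; identity at $[x;m]$ is $[x;(m,m)]$; $\lambda[x;(m,n)]=[\lambda\sigma^mx;(0,d(\lambda)+n-m)]$;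 $[x;(m,n)][y;(p,q)]=[z;(m,n+q-p)]$ with $z=x(0,n\wedge d(x))\sigma^{p\wedge d(y)}y$; degree $\overline d|_\Lambda=d$, $\overline d([x;(m,n)])=n-m$. *)

(* Defs.v *)
From mathcomp Require Import all_boot.
Set Implicit Arguments. Unset Strict Implicit. Unset Printing Implicit Defensive.

Definition nk (k : nat) := {ffun 'I_k -> nat}.
(* extended degrees: None stands for oo *)
Definition nkext (k : nat) := {ffun 'I_k -> option nat}.

Section Ops.
Variable k : nat.
Definition zerok : nk k := [ffun _ => 0].
Definition addk (m n : nk k) : nk k := [ffun i => m i + n i].
Definition subk (m n : nk k) : nk k := [ffun i => m i - n i].
Definition joink (m n : nk k) : nk k := [ffun i => maxn (m i) (n i)].
Definition lek (m n : nk k) : bool := [forall i, m i <= n i].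
Definition ek (i : 'I_k) : nk k := [ffun j => nat_of_bool (j == i)].
Definition leext (m : nk k) (d : nkext k) : bool :=
  [forall i, if d i is Some di then m i <= di else true].
Definition meetext (m : nk k) (d : nkext k) : nk k :=
  [ffun i => if d i is Some di then minn (m i) di else m i].
Definition addext (a : nk k) (d : nkext k) : nkext k :=
  [ffun i => omap (addn (a i)) (d i)].
Definition subext (d : nkext k) (a : nk k) : nkext k :=
  [ffun i => omap (fun di => di - a i) (d i)].
End Ops.

(* A countable category (objects identified with identities via idm),
   composition [comp a b] = "a b" meaningful when [src a = rng b]. *)
Record kgraph (k : nat) := KGraph {
  kObj : countType;
  kMor : countType;
  rng : kMor -> kObj;
  src : kMor -> kObj;
  idm : kObj -> kMor;
  comp : kMor -> kMor -> kMor;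
  deg : kMor -> nk k;
  rng_idm : forall v, rng (idm v) = v;
  src_idm : forall v, src (idm v) = v;
  comp_idl : forall a, comp (idm (rng a)) a = a;
  comp_idr : forall a, comp a (idm (src a)) = a;
  rng_comp : forall a b, src a = rng b -> rng (comp a b) = rng a;
  src_comp : forall a b, src a = rng b -> src (comp a b) = src b;
  compA : forall a b c, src a = rng b -> src b = rng c ->
            comp a (comp b c) = comp (comp a b) c;
  deg_idm : forall v, deg (idm v) = zerok k;
  deg_comp : forall a b, src a = rng b -> deg (comp a b) = addk (deg a) (deg b);
  fact_ex : forall l m n, deg l = addk m n ->
     exists a b, [/\ src a = rng b, comp a b = l, deg a = m & deg b = n];
  fact_uniq : forall a b a' b', src a = rng b -> src a' = rng b' ->
     comp a b = comp a' b' -> deg a = deg a' -> deg b = deg b' ->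
     a = a' /\ b = b'
}.

Section KG.
Variables (k : nat) (G : kgraph k).
Local Notation Mor := (kMor G).
Local Notation Obj := (kObj G).

Definition is_min (l m a b : Mor) : Prop :=
  [/\ src l = rng a, src m = rng b, comp l a = comp m b &
      deg (comp l a) = joink (deg l) (deg m)].

Definition finitely_aligned : Prop :=
  forall l m : Mor, exists s : seq (Mor * Mor),
    forall a b, is_min l m a b -> (a, b) \in s.

Definition exhaustive (v : Obj) (E : seq Mor) : Prop :=
  forall m : Mor, rng m = v -> exists2 l, l \in E & exists a b, is_min l m a b.

(* A candidate graph morphism: its degree d(x) and the map (p,q) |-> x(p,q)
   (only its values for p <= q <= d(x) matter). *)
Record gpath := GPath { dp : nkext k; fp : nk k -> nk k -> Mor }.

Definition vtx (x : gpath) (p : nk k) : Obj := rng (fp x p p).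

Definition is_gmorph (x : gpath) : Prop :=
  [/\ (forall p q, lek p q -> leext q (dp x) -> deg (fp x p q) = subk q p),
      (forall p q, lek p q -> leext q (dp x) ->
          rng (fp x p q) = vtx x p /\ src (fp x p q) = vtx x q),
      (forall p, leext p (dp x) -> fp x p p = idm (vtx x p)) &
      (forall p q r, lek p q -> lek q r -> leext r (dp x) ->
          comp (fp x p q) (fp x q r) = fp x p r)].

Definition is_bpath (x : gpath) : Prop :=
  is_gmorph x /\
  exists2 nx : nk k, leext nx (dp x) &
    forall (p : nk k) (i : 'I_k), lek nx p -> leext p (dp x) ->
      dp x i = Some (p i) ->
      forall l : Mor, rng l = vtx x p -> deg l <> ek i.

(* [is_concat l x m z] : z = l (sigma^m x), i.e. z is the graph morphism with
   d(z) = d(l) + (d(x) - m), z(0,d(l)) = l and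
   z(d(l)+a, d(l)+b) = (sigma^m x)(a,b) = x(a+m, b+m). *)
Definition is_concat (l : Mor) (x : gpath) (m : nk k) (z : gpath) : Prop :=
  [/\ dp z = addext (deg l) (subext (dp x) m),
      fp z (zerok k) (deg l) = l &
      forall a b, lek a b -> leext b (subext (dp x) m) ->
        fp z (addk (deg l) a) (addk (deg l) b) = fp x (addk a m) (addk b m)].

(* objects: Lambda^0 disjoint union V_Lambda (representatives) *)
Inductive eobj := EV of Obj | EW of gpath & nk k.
(* morphisms: Lambda disjoint union P_Lambda (representatives);
   EP x m n stands for (x;(m,n)) *)
Inductive emor := EL of Mor | EP of gpath & nk k & nk k.

(* equality in \overline{Lambda}^0 : equality in Lambda^0, and ~~approx on V *)
Definition eobj_eq (u w : eobj) : Prop :=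
  match u, w with
  | EV a, EV b => a = b
  | EW x m, EW y p =>
      vtx x (meetext m (dp x)) = vtx y (meetext p (dp y)) /\
      subk m (meetext m (dp x)) = subk p (meetext p (dp y))
  | _, _ => False
  end.

(* equality of morphisms of \overline{Lambda} : equality in Lambda, and ~ on P *)
Definition eeq (a b : emor) : Prop :=
  match a, b with
  | EL l, EL l' => l = l'
  | EP x m n, EP y p q =>
      [/\ fp x (meetext m (dp x)) (meetext n (dp x)) =
          fp y (meetext p (dp y)) (meetext q (dp y)),
          subk m (meetext m (dp x)) = subk p (meetext p (dp y)) &
          subk n m = subk q p]
  | _, _ => False
  end.

(* elements of V_Lambda / P_Lambda *)
Definition evalid (a : emor) : Prop :=
  match a with
  | EL _ => True
  | EP x m n => [/\ is_bpath x, lek m n & ~~ leext n (dp x)]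
  end.

Definition erng (a : emor) : eobj :=
  match a with
  | EL l => EV (rng l)
  | EP x m n => if leext m (dp x) then EV (vtx x m) else EW x m
  end.

Definition esrc (a : emor) : eobj :=
  match a with
  | EL l => EV (src l)
  | EP x m n => EW x n
  end.

Definition edeg (a : emor) : nk k :=
  match a with
  | EL l => deg l
  | EP x m n => subk n m
  end.

(* [ecomp a b c] : c represents the composite a b in \overline{Lambda}
   (for composable a, b):
   - l l' as in Lambda;
   - l [x;(m,n)] = [l sigma^m x; (0, d(l)+n-m)];
   - [x;(m,n)] [y;(p,q)] = [z;(m, n+q-p)],
       z = x(0, n /\ d(x)) sigma^{p /\ d(y)} y. *)
Definition ecomp (a b c : emor) : Prop :=
  match a, b with
  | EL l, EL l' => c = EL (comp l l')
  | EL l, EP x m n =>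
      exists z, [/\ is_bpath z, is_concat l x m z &
                    eeq c (EP z (zerok k) (addk (deg l) (subk n m)))]
  | EP x m n, EP y p q =>
      exists z, [/\ is_bpath z,
                    is_concat (fp x (zerok k) (meetext n (dp x))) y
                              (meetext p (dp y)) z &
                    eeq c (EP z m (addk n (subk q p)))]
  | EP _ _ _, EL _ => False
  end.

Definition emin_nonempty (a b : emor) : Prop :=
  exists al be g g',
    [/\ evalid al /\ evalid be,
        eobj_eq (esrc a) (erng al) /\ eobj_eq (esrc b) (erng be),
        ecomp a al g /\ ecomp b be g',
        eeq g g' & edeg g = joink (edeg a) (edeg b)].

End KG.

(* Main.v *)
Require Import Defs.
From mathcomp Require Import all_boot zify.
Set Implicit Arguments. Unset Strict Implicit.

Lemma lekE k (m n : nk k) : lek m n -> forall i, m i <= n i.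
Proof. by move/forallP. Qed.
Lemma lekI k (m n : nk k) : (forall i, m i <= n i) -> lek m n.
Proof. by move=> H; apply/forallP. Qed.
Lemma leextE k (m : nk k) (d : nkext k) : leext m d -> forall i di, d i = Some di -> m i <= di.
Proof. by move/forallP=> H i di Hd; move: (H i); rewrite Hd. Qed.
Lemma leextI k (m : nk k) (d : nkext k) : (forall i di, d i = Some di -> m i <= di) -> leext m d.
Proof. move=> H; apply/forallP=> i; case E: (d i) => [di|] //; exact: H. Qed.

Ltac pw := apply/ffunP => i; rewrite !ffunE.
Definition ap k (f : nk k) (i : 'I_k) : nat := f i.
Lemma apE k (f : nk k) (i : 'I_k) : f i = ap f i. Proof. by []. Qed.
Ltac revnat := repeat match goal with
 | H : @eq nat _ _ |- _ => revert H
 | H : is_true (leq _ _) |- _ => revert H end.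
Ltac clprop := repeat match goal with H : ?T |- _ =>
  match type of T with Prop => clear H end end.
Ltac normff := revnat; rewrite ?apE; clprop.
Ltac nlia := normff; lia.

Definition sumdeg k (G : kgraph k) (s : seq (kMor G)) : nk k :=
  foldr (fun l acc => addk (deg l) acc) (zerok k) s.
Lemma sumdeg_ge k (G : kgraph k) (s : seq (kMor G)) l i :
  l \in s -> deg l i <= sumdeg s i.
Proof.
elim: s => [|a s IH] //=; rewrite in_cons => /orP [/eqP->|/IH H]; rewrite ffunE; nlia.
Qed.

Lemma deg0_idm k (G : kgraph k) (b : kMor G) : deg b = zerok k -> b = idm (rng b).
Proof.
move=> Hb.
have [H _] := @fact_uniq _ _ (idm (rng b)) b b (idm (src b)) (src_idm _)
  (esym (rng_idm _)) (etrans (comp_idl _) (esym (comp_idr _)))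
  (etrans (deg_idm _) (esym Hb)) (etrans Hb (esym (deg_idm _))).
exact: esym H.
Qed.

Lemma shift_bpath k (G : kgraph k) (x : gpath G) (m : nk k) (dz : nkext k) :
  is_bpath x -> leext m (dp x) ->
  (forall i, dz i = omap (fun d => d - m i) (dp x i)) ->
  is_bpath (GPath dz (fun a b => fp x (addk a m) (addk b m))).
Proof.
move=> [[H1 H2 H3 H4] [nx Hnx Hb]] Hm Hdz.
have Hm' := leextE Hm.
have HL : forall q, leext q dz -> leext (addk q m) (dp x).
  move=> q /leextE Hq; apply: leextI => i di Hd; rewrite ffunE.
  have := Hq i (di - m i); rewrite Hdz Hd /= => /(_ erefl).
  have := Hm' i di Hd; nlia.
have HK : forall p q, lek p q -> lek (addk p m) (addk q m).
  move=> p q /lekE H; apply: lekI => i; rewrite !ffunE; have := H i; nlia.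
split; first split => /=.
- move=> p q Hpq Hq; rewrite H1 ?HK ?HL //; pw; nlia.
- move=> p q Hpq Hq; exact: H2 (HK _ _ Hpq) (HL _ Hq).
- move=> p Hp; exact: H3 (HL _ Hp).
- move=> p q r Hpq Hqr Hr; exact: H4 (HK _ _ Hpq) (HK _ _ Hqr) (HL _ Hr).
exists (subk nx m) => /=.
  apply: leextI => i di; rewrite Hdz; case Hd: (dp x i) => [d|] //= [<-].
  rewrite ffunE; have := leextE Hnx Hd; nlia.
move=> p i Hp Hpz Hpi l Hl; apply: (Hb (addk p m) i _ (HL _ Hpz)) Hl.
- apply: lekI => j; rewrite ffunE; have := lekE Hp j; rewrite ffunE; nlia.
- move: Hpi; rewrite Hdz ffunE; case Hd: (dp x i) => [d|] //= [<-].
  have := Hm' i d Hd => ?; congr Some; nlia.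
Qed.

Lemma leext_trans k (a b : nk k) d : lek a b -> leext b d -> leext a d.
Proof.
move=> /lekE H /leextE H2; apply: leextI => i di Hd; have := H2 _ _ Hd; have := H i; nlia.
Qed.

Theorem lemma3p27 (k : nat) (G : kgraph k) (v : kObj G) (E : seq (kMor G)) :
  finitely_aligned G ->
  (forall l, l \in E -> rng l = v) ->
  exhaustive v E ->
  forall mu : emor G, evalid mu -> eobj_eq (erng mu) (EV v) ->
    exists2 l, l \in E & emin_nonempty (EL l) mu.
Proof.
move=> _ HE Hex [ml|x m n] Hv Hr.
  have [l Hl [a [b [H1 H2 H3 H4]]]] := Hex ml Hr.
  exists l => //; exists (EL a), (EL b), (EL (Defs.comp l a)), (EL (Defs.comp ml b)); by split.
case: Hv => Hxb Hmn Hn.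
move: Hr => /=; case Hm: (leext m (dp x)) => //= Hr.
have Hx := Hxb; case: Hx => [[H1 H2 H3 H4] [nx Hnx Hbd]].
pose N := sumdeg E.
have [q Hqi] : {q : nk k | forall i, q i = if dp x i is Some d then minn (m i + nx i + N i) d
                           else m i + nx i + N i}.
  by exists (meetext (addk (addk m nx) N) (dp x)) => i; rewrite !ffunE.
have Hmq : lek m q.
  apply: lekI => i; rewrite Hqi; case Hd: (dp x i) => [d|]; last nlia.
  have := leextE Hm Hd; nlia.
have Hnxq : lek nx q.
  apply: lekI => i; rewrite Hqi; case Hd: (dp x i) => [d|]; last nlia.
  have := leextE Hnx Hd; nlia.
have Hq : leext q (dp x).
  apply: leextI => i di Hd; rewrite Hqi Hd; nlia.
have [Hr1 Hs1] := H2 m q Hmq Hq.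
have [l Hl [a [b [Hla Hmb Hc Hdeg]]]] := Hex (fp x m q) (etrans Hr1 Hr).
have Hdm := H1 m q Hmq Hq.
have Hdc : deg (Defs.comp l a) = addk (deg (fp x m q)) (deg b) by rewrite Hc deg_comp.
have Hb0 : deg b = zerok k.
  pw; case Hbi: (deg b i) => [|j] //; exfalso.
  have Hli : deg l i <= N i := sumdeg_ge i Hl.
  have := congr1 (fun f : nk k => f i) Hdeg; rewrite Hdc !ffunE Hdm ffunE Hbi => Heq.
  have := Hqi i; case Hd: (dp x i) => [d|] Hqd; last nlia.
  have Hmd := leextE Hm Hd.
  have Hqd' : q i = d by nlia.
  have Hbe : deg b = addk (ek i) (subk (deg b) (ek i)).
    apply/ffunP => j0; rewrite !ffunE; case: eqP => [->|_]; rewrite ?Hbi /=; nlia.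
  have [e [f [Hef Hcomp Hde _]]] := fact_ex Hbe.
  apply: (Hbd q i Hnxq Hq _ e _ Hde); first by rewrite Hd Hqd'.
  by rewrite -Hs1 Hmb -Hcomp rng_comp.
have Hbid := deg0_idm Hb0.
have Hlam : Defs.comp l a = fp x m q by rewrite Hc Hbid -Hmb comp_idr.
have Hda : addk (deg l) (deg a) = subk q m by rewrite -deg_comp // Hlam.
pose p := addk m (deg l).
have Hdai : forall i, deg l i + deg a i = q i - m i.
  by move=> i; have := congr1 (fun f : nk k => f i) Hda; rewrite !ffunE.
have Hmp : lek m p by apply: lekI => i; (try rewrite /p); (try rewrite /B); (try rewrite /J); (try rewrite /n'); rewrite ?ffunE; nlia.
have Hpq : lek p q.
  apply: lekI => i; (try rewrite /p); (try rewrite /B); (try rewrite /J); (try rewrite /n'); rewrite ?ffunE; have := Hdai i; have := lekE Hmq i; nlia.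
have Hp : leext p (dp x) := leext_trans Hpq Hq.
have Hlp : l = fp x m p.
  have [Hr2 Hs2] := H2 m p Hmp Hp.
  have [Hr3 Hs3] := H2 p q Hpq Hq.
  have Hd1 : deg (fp x m p) = deg l.
    rewrite (H1 _ _ Hmp Hp); pw; rewrite /p ?ffunE; nlia.
  have Hd2 : deg (fp x p q) = deg a.
    rewrite (H1 _ _ Hpq Hq); pw; (try rewrite /p); (try rewrite /B); (try rewrite /J); (try rewrite /n'); rewrite ?ffunE; have := Hdai i; have := lekE Hmq i; nlia.
  have [<- _] := @fact_uniq _ _ (fp x m p) (fp x p q) l a (etrans Hs2 (esym Hr3)) Hla
     (etrans (H4 _ _ _ Hmp Hpq Hq) (esym Hlam)) Hd1 Hd2.
  by [].
pose J := joink (deg l) (subk n m).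
pose B := addk m J.
have HnB : lek n B by apply: lekI => i; (try rewrite /p); (try rewrite /B); (try rewrite /J); (try rewrite /n'); rewrite ?ffunE; have := lekE Hmn i; nlia.
have HpB : lek p B by apply: lekI => i; (try rewrite /p); (try rewrite /B); (try rewrite /J); (try rewrite /n'); rewrite ?ffunE; nlia.
have Hnot : ~~ leext B (dp x) by apply: contra Hn; exact: leext_trans.
pose z := GPath (addext (deg l) (subext (dp x) p)) (fun a b => fp x (addk a m) (addk b m)).
have Hz : is_bpath z.
  apply: shift_bpath => // i; (try rewrite /p); (try rewrite /B); (try rewrite /J); (try rewrite /n'); rewrite ?ffunE; case Hd: (dp x i) => [d|] //=.
  have := leextE Hp Hd; rewrite ffunE => ?; congr Some; nlia.
exists l => //.
exists (EP x p B), (EP x n B), (EP z (zerok k) (addk (deg l) (subk B p))),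
  (EP x m (addk n (subk B n))).
split.
- by split; split.
- split => /=; last by rewrite (negbTE Hn) /=; split.
  by rewrite Hp Hlp; case: (H2 m p Hmp Hp).
- split => /=.
  + exists z; split; [exact: Hz| |by split].
    split => //=.
      by rewrite [RHS]Hlp; congr (fp x _ _); pw; (try rewrite /p); (try rewrite /B); (try rewrite /J); (try rewrite /n'); rewrite ?ffunE; nlia.
    by move=> a0 b0 _ _; congr (fp x _ _); pw; (try rewrite /p); (try rewrite /B); (try rewrite /J); (try rewrite /n'); rewrite ?ffunE; nlia.
  + exists x; split; [exact: Hxb| |by split].
    pose n' := meetext n (dp x).
    have H0n' : lek (zerok k) n' by apply: lekI => i; rewrite ffunE.
    have Hn'x : leext n' (dp x).
      apply: leextI => i di Hd; rewrite ffunE Hd; nlia.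
    have Hdeg' : deg (fp x (zerok k) n') = n' by rewrite (H1 _ _ H0n' Hn'x); pw; (try rewrite /p); (try rewrite /B); (try rewrite /J); (try rewrite /n'); rewrite ?ffunE; nlia.
    split; rewrite Hdeg' //.
      pw; (try rewrite /p); (try rewrite /B); (try rewrite /J); (try rewrite /n'); rewrite ?ffunE; case Hd: (dp x i) => [d|] //=; congr Some; nlia.
    by move=> a0 b0 _ _; congr (fp x _ _); pw; (try rewrite /p); (try rewrite /B); (try rewrite /J); (try rewrite /n'); rewrite ?ffunE; nlia.
- split => /=.
  + congr (fp x _ _); pw; (try rewrite /p); (try rewrite /B); (try rewrite /J); (try rewrite /n'); rewrite ?ffunE; case Hd: (dp x i) => [d|] /=;
      first [have := leextE Hm Hd; have := leextE Hp Hd; rewrite ?ffunE; nlia | nlia].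
  + pw; (try rewrite /p); (try rewrite /B); (try rewrite /J); (try rewrite /n'); rewrite ?ffunE; case Hd: (dp x i) => [d|] /=;
      first [have := leextE Hm Hd; have := leextE Hp Hd; rewrite ?ffunE; nlia | nlia].
  + pw; (try rewrite /p); (try rewrite /B); (try rewrite /J); (try rewrite /n'); rewrite ?ffunE; nlia.
- pw; (try rewrite /p); (try rewrite /B); (try rewrite /J); (try rewrite /n'); rewrite ?ffunE; nlia.
Qed.
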